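(* If $A$ is a doubly nonnegative matrix with at most three distinct eigenvalues, then $A^t$ is doubly nonnegative for all $t\ge 1$.
   Context: A real matrix is doubly nonnegative if it is symmetric, positive semidefinite, and entry-wise nonnegative. For positive semidefinite $A=\sum_i\lambda_ix_ix_i^T$ (orthonormal eigenvectors, $\lambda_i\ge 0$) and $t>0$, $A^t=\sum_i\lambda_i^tx_ix_i^T$. *)

(* Defs.v *)
From mathcomp Require Import all_boot all_order all_algebra.
From mathcomp Require Import reals exp.
Set Implicit Arguments. Unset Strict Implicit. Unset Printing Implicit Defensive.
Import Order.TTheory GRing.Theory Num.Theory.
Local Open Scope ring_scope.

Definition symmetric_mx (R : realType) (n : nat) (A : 'M[R]_n) : Prop :=
  A^T = A.

Definition psd_mx (R : realType) (n : nat) (A : 'M[R]_n) : Prop :=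
  symmetric_mx A /\ forall x : 'cV[R]_n, 0 <= (x^T *m A *m x) ord0 ord0.

Definition nonneg_mx (R : realType) (n : nat) (A : 'M[R]_n) : Prop :=
  forall i j, 0 <= A i j.

Definition dnn_mx (R : realType) (n : nat) (A : 'M[R]_n) : Prop :=
  symmetric_mx A /\ psd_mx A /\ nonneg_mx A.

(* B is A^t: there is an orthonormal eigendecomposition
   A = sum_i lambda_i x_i x_i^T = U diag(lambda) U^T (columns of U are the
   orthonormal eigenvectors x_i, lambda_i >= 0) with
   B = sum_i lambda_i^t x_i x_i^T = U diag(lambda^t) U^T. *)
Definition is_mxpow (R : realType) (n : nat) (A : 'M[R]_n) (t : R)
    (B : 'M[R]_n) : Prop :=
  exists (U : 'M[R]_n) (d : 'rV[R]_n),
    U *m U^T = 1%:M /\ (forall i, 0 <= d ord0 i) /\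
    A = U *m diag_mx d *m U^T /\
    B = U *m diag_mx (map_mx (fun x => powR x t) d) *m U^T.

(* Main.v *)
Require Import Defs.
From mathcomp Require Import all_boot all_order all_algebra.
From mathcomp Require Import reals exp.
From mathcomp Require Import all_classical all_reals all_analysis.
From mathcomp Require Import lra ring.
Import Order.TTheory GRing.Theory Num.Theory numFieldNormedType.Exports.
Local Open Scope ring_scope.

Section Helpers.
Local Open Scope classical_set_scope.
Lemma sum_cvg (R : realType) (I : eqType) (r : seq I) (f : I -> nat -> R) (l : I -> R) :
  (forall i, f i m @[m --> \oo] --> l i) ->
  \sum_(i <- r) f i m @[m --> \oo] --> \sum_(i <- r) l i.
Proof.
move=> H; elim: r => [|i r IH].
  rewrite big_nil; under eq_cvg do rewrite big_nil; exact: cvg_cst.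
rewrite big_cons; under eq_cvg do rewrite big_cons.
exact: cvgD.
Qed.

Lemma top_weight_ge0 (R : realType) n (w d : 'I_n -> R) x3 :
  0 < x3 -> (forall k, 0 <= d k <= x3) ->
  (forall m, (0 < m)%N -> 0 <= \sum_k w k * d k ^+ m) ->
  0 <= \sum_k w k * (d k == x3)%:R.
Proof.
move=> x30 dk H.
have cu : (\sum_k w k * (d k / x3) ^+ m) @[m --> \oo] --> \sum_k w k * (d k == x3)%:R.
  apply: sum_cvg => k; apply: cvgMl_tmp.
  have [->|ne] := eqVneq (d k) x3.
    rewrite divff ?gt_eqF //; under eq_cvg do rewrite expr1n; exact: cvg_cst.
  apply: cvg_expr.
  have /andP[d0 d3] := dk k.
  rewrite ger0_norm ?divr_ge0 //; last exact: ltW.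
  by rewrite ltr_pdivrMr // mul1r lt_neqAle ne d3.

rewrite -(cvg_lim _ cu) //; apply: limr_ge; first by apply/cvg_ex; eexists; exact: cu.
near=> m.
have m0 : (0 < m)%N by near: m; exists 1%N.
have := H m m0.
rewrite (_ : \sum_k w k * (d k / x3) ^+ m = (\sum_k w k * d k ^+ m) / x3 ^+ m).
  by move=> h; rewrite divr_ge0 // exprn_ge0 // ltW.
rewrite mulr_suml; apply: eq_bigr => k _; rewrite expr_div_n mulrA //.
Unshelve. all: by end_near.
Qed.

Lemma chord (R : realType) (t x1 x2 x3 : R) : 1 <= t -> 0 <= x1 -> x1 < x2 -> x2 < x3 ->
  (x2 `^ t - x1 `^ t) * (x3 - x1) <= (x3 `^ t - x1 `^ t) * (x2 - x1).
Proof.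
move=> t1 x10 x12 x23.
have x13 : 0 < x3 - x1 by lra.
set l := (x2 - x1) / (x3 - x1).
have l0 : 0 <= l by rewrite divr_ge0 // ?ltW // subr_gt0.
have l1 : l <= 1 by rewrite ler_pdivrMr // mul1r; lra.
have := convex_powR t1 (Itv01 l0 l1) (x:=x3) (y:=x1).
move=> H; move: H; rewrite [X in X `^ _ <= _]convRE /=.
have -> : l * x3 + (1 - l) * x1 = x2.
  rewrite /l; field; lra.
rewrite /unstable.onem. move=> /(_ _ _); rewrite !inE /= !in_itv /= !andbT.
move=> /(_ ltac:(lra) x10) h.
have hl : x2 - x1 = l * (x3 - x1) by rewrite /l divfK // gt_eqF.
rewrite hl.
have h2 : x2 `^ t - x1 `^ t <= l * (x3 `^ t - x1 `^ t) by move: h; rewrite convRE /= /unstable.onem mulrBl mul1r mulrBr; lra.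
rewrite mulrA (mulrC _ l); apply: ler_wpM2r =>//; lra.
Qed.
End Helpers.

Lemma four_distinct (R : realType) (s : seq R) x1 x3 a b :
  (size s <= 3)%N -> x1 \in s -> x3 \in s -> a \in s -> b \in s ->
  x1 < a < x3 -> x1 < b < x3 -> a = b.
Proof.
move=> hs h1 h3 ha hb /andP[h1a ha3] /andP[h1b hb3].
apply/eqP; apply: contraLR hs => nab; rewrite -ltnNge.
have U : uniq [:: x1; x3; a; b].
  rewrite /= !inE !negb_or nab !andbT.
  rewrite (lt_eqF h1a) (lt_eqF h1b) (gt_eqF ha3) (gt_eqF hb3) /=.
  by rewrite (lt_eqF (lt_trans h1a ha3)).
have := uniq_leq_size U; apply.
by move=> x; rewrite !inE => /or4P[] /eqP->.
Qed.

Lemma core (R : realType) n (w d : 'I_n -> R) (f : R -> R) x1 x3 c :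
  \sum_k w k = 0 -> 0 <= \sum_k w k * (d k == x3)%:R ->
  0 <= \sum_k w k * d k -> 0 <= c -> c * (x3 - x1) <= f x3 - f x1 ->
  (forall k, f (d k) - f x1 = c * (d k - x1) + (d k == x3)%:R * (f x3 - f x1 - c * (x3 - x1))) ->
  0 <= \sum_k w k * f (d k).
Proof.
move=> Hw S3 Hd c0 cK Hid.
set K := f x3 - f x1 - c * (x3 - x1).
have -> : \sum_k w k * f (d k) =
   \sum_k (f x1 * w k + c * (w k * d k) - c * x1 * w k + K * (w k * (d k == x3)%:R)).
  apply: eq_bigr => k _.
  have -> : f (d k) = f x1 + (c * (d k - x1) + (d k == x3)%:R * K) by rewrite -Hid; ring.
  ring.
rewrite !big_split /= -!mulr_sumr Hw !mulr0 add0r sumrN -mulr_sumr Hw mulr0 oppr0 addr0.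
apply: addr_ge0; first exact: mulr_ge0.
by apply: mulr_ge0 => //; rewrite subr_ge0.
Qed.

Lemma offdiag (R : realType) n (w d : 'I_n -> R) (s : seq R) t :
  1 <= t -> (size s <= 3)%N -> (forall k, 0 <= d k) -> (forall k, d k \in s) ->
  \sum_k w k = 0 -> (forall m, (0 < m)%N -> 0 <= \sum_k w k * d k ^+ m) ->
  0 <= \sum_k w k * d k `^ t.
Proof.
move=> t1 hs d0 ds Hw Hm.
case: n w d d0 ds Hw Hm => [|n] w d d0 ds Hw Hm; first by rewrite big_ord0.
have t0 : 0 <= t by lra.
have mono : forall x y, 0 <= x -> x <= y -> x `^ t <= y `^ t.
  move=> x y x0 xy; apply: ge0_ler_powR => //; rewrite nnegrE //; exact: le_trans xy.
case: (@arg_minP _ _ _ ord0 xpredT d isT) => k1 _ H1.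
case: (@arg_maxP _ _ _ ord0 xpredT d isT) => k3 _ H3.
set x1 := d k1 in H1 *; set x3 := d k3 in H3 *.
have H1' : forall k, x1 <= d k by move=> k; exact: H1.
have H3' : forall k, d k <= x3 by move=> k; exact: H3.
have S3 : 0 <= \sum_k w k * (d k == x3)%:R.
  have [x30|] := ltP 0 x3.
    by apply: top_weight_ge0 => // k; rewrite d0 H3'.
  move=> x3le; have x30 : x3 = 0 by apply/eqP; rewrite eq_le x3le d0.
  rewrite (eq_bigr w) ?Hw // => k _.
  have -> : d k = x3 by apply/eqP; rewrite eq_le H3' x30 d0.
  by rewrite eqxx mulr1.
have Hd : 0 <= \sum_k w k * d k.
  by have := Hm 1%N isT; under eq_bigr do rewrite expr1.
case: (pickP (fun k => (x1 < d k) && (d k < x3))) => [k2 /andP[h12 h23]|none].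
- set c := (d k2 `^ t - x1 `^ t) / (d k2 - x1).
  have d21 : 0 < d k2 - x1 by rewrite subr_gt0.
  apply: (@core R _ w d (fun x => x `^ t) x1 x3 c) => //.
  + rewrite /c divr_ge0 // ?(ltW d21) // subr_ge0; apply: mono; [exact: d0 | exact: ltW].
  + rewrite /c mulrAC ler_pdivrMr //; apply: chord => //; exact: d0.
  + move=> k.
    have [->|nk3] := eqVneq (d k) x3; first by rewrite mul1r; ring.
    rewrite (_ : false%:R = 0 :> R) // mul0r addr0.
    have [ek1|nk1] := eqVneq (d k) x1; first by rewrite ek1 !subrr mulr0.
    have hk : x1 < d k < x3 by rewrite !lt_neqAle H1' H3' nk3 eq_sym nk1.
    have -> : d k = d k2.
      by apply: (@four_distinct _ _ _ _ _ _ hs (ds k1) (ds k3) (ds k) (ds k2) hk); rewrite h12 h23.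
    by rewrite /c divfK // gt_eqF.
- apply: (@core R _ w d (fun x => x `^ t) x1 x3 0) => //.
  + rewrite mul0r subr_ge0; apply: mono; [exact: d0 | exact: H1'].
  + move=> k.
    have [->|nk3] := eqVneq (d k) x3; first by rewrite mul1r; ring.
    rewrite (_ : false%:R = 0 :> R) // !mul0r addr0.
    have [ek1|nk1] := eqVneq (d k) x1; first by rewrite ek1 !subrr.
    have := none k; rewrite !lt_neqAle H1' H3' nk3 eq_sym nk1 //.
Qed.

Lemma entry_form (R : realType) p n (M : 'M[R]_(p,n)) (e : 'rV[R]_n) i j :
  (M *m diag_mx e *m M^T) i j = \sum_k M i k * e 0 k * M j k.
Proof. rewrite mxE; apply: eq_bigr => k _; rewrite mul_mx_diag !mxE //. Qed.

Theorem theorem5p3 (R : realType) (n : nat) (A : 'M[R]_n) :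
  dnn_mx A ->
  (exists s : seq R, (size s <= 3)%N /\ forall a, eigenvalue A a -> a \in s) ->
  forall t : R, 1 <= t ->
  forall B : 'M[R]_n, is_mxpow A t B -> dnn_mx B.
Proof.
move=> [symA [psdA nnA]] [s [hs hev]] t t1 B [U [d [UU [d0 [hA hB]]]]].
have UtU : U^T *m U = 1%:M by apply: mulmx1C.
have ds : forall k, d ord0 k \in s.
  move=> k; apply: hev; apply/eigenvalueP; exists (row k U^T).
    rewrite -row_mul hA !mulmxA UtU mul1mx mul_diag_mx.
    by apply/rowP => j; rewrite !mxE.
  apply/eqP => h0.
  have : row k (U^T *m U) = row k 1%:M by rewrite UtU.
  rewrite row_mul h0 mul0mx => /rowP /(_ k); rewrite !mxE eqxx /= => /eqP.
  by rewrite eq_sym oner_eq0.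
have Pm : forall m, (0 < m)%N -> forall i j,
    0 <= (U *m diag_mx (map_mx (fun x => x ^+ m) d) *m U^T) i j.
  elim=> [//|[|m] IH] _ i j.
    have -> : map_mx (fun x => x ^+ 1) d = d by apply/rowP => k; rewrite !mxE expr1.
    by rewrite -hA.
  have -> : U *m diag_mx (map_mx (fun x => x ^+ m.+2) d) *m U^T =
      (U *m diag_mx d *m U^T) *m (U *m diag_mx (map_mx (fun x => x ^+ m.+1) d) *m U^T).
    rewrite -!mulmxA (mulmxA U^T) UtU mul1mx (mulmxA (diag_mx d)); congr (_ *m (_ *m _)).
    rewrite mul_diag_mx; apply/matrixP => a b; rewrite !mxE.
    by case: (a == b); rewrite ?mulr0n ?mulr1n ?mulr0 // exprS.
  rewrite -hA mxE; apply: sumr_ge0 => k _; apply: mulr_ge0; first exact: nnA.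
  exact: IH.
have BE : forall i j, B i j = \sum_k U i k * (d ord0 k `^ t) * U j k.
  by move=> i j; rewrite hB entry_form; apply: eq_bigr => k _; rewrite mxE.
have symB : symmetric_mx B.
  by rewrite /symmetric_mx hB !trmx_mul trmxK tr_diag_mx mulmxA.
split; first exact: symB.
split.
  split; first exact: symB.
  move=> x; set N := x^T *m U.
  have -> : x^T *m B *m x = N *m diag_mx (map_mx (fun x => x `^ t) d) *m N^T.
    by rewrite hB /N trmx_mul trmxK !mulmxA.
  rewrite entry_form; apply: sumr_ge0 => k _; rewrite mulrAC.
  by apply: mulr_ge0; [rewrite -expr2 sqr_ge0 | rewrite mxE; exact: powR_ge0].
move=> i j; rewrite BE.
have [<-|nij] := eqVneq i j.
  apply: sumr_ge0 => k _; rewrite mulrAC.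
  by apply: mulr_ge0; [rewrite -expr2 sqr_ge0 | exact: powR_ge0].
rewrite (eq_bigr (fun k => (U i k * U j k) * d ord0 k `^ t)); last first.
  by move=> k _; rewrite mulrAC.
apply: (@offdiag R n (fun k => U i k * U j k) (fun k => d ord0 k) s t).
- exact: t1.
- exact: hs.
- by move=> k; exact: d0.
- exact: ds.
- transitivity ((U *m U^T) i j); last by rewrite UU mxE (negbTE nij).
  rewrite mxE /=; apply: eq_bigr => k _; by rewrite mxE.
- move=> m m0; have := Pm m m0 i j; rewrite entry_form.
  by under eq_bigr do rewrite mxE mulrAC.
Qed.
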